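(* The quadric surface $Q$ meets the octic $R$ only within the singular locus of $R$; in fact $$Q\cap R\subset S_{(x_0,x_1)}\cup S_{(x_0,x_2)}\cup S_{(x_1,x_2)}\cup S_{(x_3,x_4)}.$$
   Context: Let $\Delta'(x_0,\ldots,x_4):=\prod_{i_1,\ldots,i_4\in\{0,1\}}\big(\sqrt{x_0}+(-1)^{i_1}\sqrt{x_1}+\cdots+(-1)^{i_4}\sqrt{x_4}\big)\in\mathbb{Q}[x_0,\ldots,x_4]$ (degree $8$), and let $R\subset\mathbf{P}^4$ be the octic threefold $\Delta'=0$. $Q\subset\mathbf{P}^4$ is the quadric surface $l=q=0$ with $l:=x_0+x_1+x_2-3x_3-3x_4$ and $q:=x_0^2+x_1^2+x_2^2+9x_3^2-x_0x_1-x_0x_2-3x_0x_3-x_1x_2-3x_1x_3-3x_2x_3$. For $0\le i<j\le4$, $S_{(x_i,x_j)}\subset\mathbf{P}^4$ is the surface given by $x_i=x_j$ and $x_k^2+x_l^2+x_m^2-2x_kx_l-2x_kx_m-2x_lx_m=0$, where $\{k,l,m\}=\{0,\ldots,4\}\setminus\{i,j\}$. *)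

(* Defs.v *)
From HB Require Import structures.
From mathcomp Require Import all_boot all_order all_algebra.
From mathcomp Require Import mpoly.
Set Implicit Arguments. Unset Strict Implicit. Unset Printing Implicit Defensive.
Import Order.TTheory GRing.Theory Num.Theory.
Local Open Scope ring_scope.

(* Product over sign vectors (i1,...,i4) in {0,1}^4 of
   s0 + (-1)^i1 s1 + ... + (-1)^i4 s4, as a polynomial in the "square
   roots" s0,...,s4.  It is even in each variable. *)
Definition sqrtProd (R : comNzRingType) : {mpoly R[5]} :=
  \prod_(e : {ffun 'I_4 -> bool})
     ('X_ord0 + \sum_(k < 4) ((-1) ^+ (e k : nat)) *: 'X_(lift ord0 k)).

Definition mhalf (m : 'X_{1..5}) : 'X_{1..5} := [multinom (m i)./2 | i < 5].

(* Delta'(x0,...,x4): the polynomial D with D(s0^2,...,s4^2) = sqrtProd(s);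
   obtained from sqrtProd by replacing each monomial s^(2a) by x^a
   (only monomials with even exponents occur in sqrtProd). *)
Definition Delta' (R : comNzRingType) : {mpoly R[5]} :=
  \sum_(m <- msupp (sqrtProd R)) ((sqrtProd R)@_m *: 'X_[mhalf m]).

Section Geometry.
Variable C : numClosedFieldType.
Implicit Types x : 'I_5 -> C.

Definition i0 : 'I_5 := @Ordinal 5 0 isT.
Definition i1 : 'I_5 := @Ordinal 5 1 isT.
Definition i2 : 'I_5 := @Ordinal 5 2 isT.
Definition i3 : 'I_5 := @Ordinal 5 3 isT.
Definition i4 : 'I_5 := @Ordinal 5 4 isT.

(* x represents a point of P^4 (homogeneous coordinates, not all zero) *)
Definition proj_point x : Prop := exists i, x i != 0.

Definition inR x : Prop := (Delta' C).@[x] = 0.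

(* singular locus of R (Jacobian criterion) *)
Definition inSingR x : Prop :=
  (Delta' C).@[x] = 0 /\ forall i : 'I_5, ((Delta' C)^`M(i)).@[x] = 0.

Definition lform x : C := x i0 + x i1 + x i2 - 3 * x i3 - 3 * x i4.
Definition qform x : C :=
  x i0 ^+ 2 + x i1 ^+ 2 + x i2 ^+ 2 + 9 * x i3 ^+ 2
  - x i0 * x i1 - x i0 * x i2 - 3 * x i0 * x i3
  - x i1 * x i2 - 3 * x i1 * x i3 - 3 * x i2 * x i3.

Definition inQ x : Prop := lform x = 0 /\ qform x = 0.

(* S_(x_i,x_j) with {k,l,m} the complementary indices *)
Definition inS (i j k l m : 'I_5) x : Prop :=
  x i = x j /\
  x k ^+ 2 + x l ^+ 2 + x m ^+ 2
  - 2 * x k * x l - 2 * x k * x m - 2 * x l * x m = 0.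

End Geometry.

(* Main.v *)
Require Import Defs.
From HB Require Import structures.
From mathcomp Require Import all_boot all_order all_algebra.
From mathcomp Require Import mpoly.
From mathcomp Require Import ring.
From mathcomp Require Import ssrcomplements.
Import Order.TTheory GRing.Theory Num.Theory.
Local Open Scope ring_scope.
Set Implicit Arguments. Unset Strict Implicit. Unset Printing Implicit Defensive.

Section PolyDefs.
Variable R : comNzRingType.
Definition Fe (e1 e2 e3 e4 e5 : R) : R :=
  e1^+8 - (2%:R^+4) * e1^+6 * e2 + (2%:R^+5 * 3%:R) * e1^+4 * e2^+2 - (2%:R^+7) * e1^+4 * e4 - (2%:R^+11) * e1^+3 * e5 - (2%:R^+8) * e1^+2 * e2^+3 + (2%:R^+10) * e1^+2 * e2 * e4 + (2%:R^+13) * e1 * e2 * e5 + (2%:R^+8) * e2^+4 - (2%:R^+11) * e2^+2 * e4 - (2%:R^+14) * e3 * e5 + (2%:R^+12) * e4^+2.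
Definition F1 (e1 e2 e3 e4 e5 : R) : R :=
  (2%:R^+3) * e1^+7 - (2%:R^+5 * 3%:R) * e1^+5 * e2 + (2%:R^+7 * 3%:R) * e1^+3 * e2^+2 - (2%:R^+9) * e1^+3 * e4 - (2%:R^+11 * 3%:R) * e1^+2 * e5 - (2%:R^+9) * e1 * e2^+3 + (2%:R^+11) * e1 * e2 * e4 + (2%:R^+13) * e2 * e5.
Definition F2 (e1 e2 e3 e4 e5 : R) : R :=
  - (2%:R^+4) * e1^+6 + (2%:R^+6 * 3%:R) * e1^+4 * e2 - (2%:R^+8 * 3%:R) * e1^+2 * e2^+2 + (2%:R^+10) * e1^+2 * e4 + (2%:R^+13) * e1 * e5 + (2%:R^+10) * e2^+3 - (2%:R^+12) * e2 * e4.
Definition F3 (e1 e2 e3 e4 e5 : R) : R :=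
  - (2%:R^+14) * e5.
Definition F4 (e1 e2 e3 e4 e5 : R) : R :=
  - (2%:R^+7) * e1^+4 + (2%:R^+10) * e1^+2 * e2 - (2%:R^+11) * e2^+2 + (2%:R^+13) * e4.
Definition F5 (e1 e2 e3 e4 e5 : R) : R :=
  - (2%:R^+11) * e1^+3 + (2%:R^+13) * e1 * e2 - (2%:R^+14) * e3.
Definition sy1 (x0 x1 x2 x3 x4 : R) : R := x0 + x1 + x2 + x3 + x4.
Definition sy2 (x0 x1 x2 x3 x4 : R) : R :=
  x0*x1+x0*x2+x0*x3+x0*x4+x1*x2+x1*x3+x1*x4+x2*x3+x2*x4+x3*x4.
Definition sy3 (x0 x1 x2 x3 x4 : R) : R :=
  x0*x1*x2+x0*x1*x3+x0*x1*x4+x0*x2*x3+x0*x2*x4+x0*x3*x4+x1*x2*x3+x1*x2*x4+x1*x3*x4+x2*x3*x4.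
Definition sy4 (x0 x1 x2 x3 x4 : R) : R :=
  x0*x1*x2*x3+x0*x1*x2*x4+x0*x1*x3*x4+x0*x2*x3*x4+x1*x2*x3*x4.
Definition sy5 (x0 x1 x2 x3 x4 : R) : R := x0*x1*x2*x3*x4.
Definition Ex (x0 x1 x2 x3 x4 : R) : R :=
  Fe (sy1 x0 x1 x2 x3 x4) (sy2 x0 x1 x2 x3 x4) (sy3 x0 x1 x2 x3 x4)
     (sy4 x0 x1 x2 x3 x4) (sy5 x0 x1 x2 x3 x4).
Definition Dg (x0 x1 x2 x3 x4 z1 z2 z3 z4 : R) : R :=
  let e1 := sy1 x0 x1 x2 x3 x4 in let e2 := sy2 x0 x1 x2 x3 x4 in
  let e3 := sy3 x0 x1 x2 x3 x4 in let e4 := sy4 x0 x1 x2 x3 x4 in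
  let e5 := sy5 x0 x1 x2 x3 x4 in
  F1 e1 e2 e3 e4 e5 + F2 e1 e2 e3 e4 e5 * (z1+z2+z3+z4)
  + F3 e1 e2 e3 e4 e5 * (z1*z2+z1*z3+z1*z4+z2*z3+z2*z4+z3*z4)
  + F4 e1 e2 e3 e4 e5 * (z1*z2*z3+z1*z2*z4+z1*z3*z4+z2*z3*z4)
  + F5 e1 e2 e3 e4 e5 * (z1*z2*z3*z4).
End PolyDefs.

Lemma Ex_rmorph (R S : comNzRingType) (f : {rmorphism R -> S}) (a0 a1 a2 a3 a4 : R) :
  f (Ex a0 a1 a2 a3 a4) = Ex (f a0) (f a1) (f a2) (f a3) (f a4).
Proof.
rewrite /Ex /Fe /sy1 /sy2 /sy3 /sy4 /sy5.
by rewrite !(rmorph_nat, rmorphD, rmorphB, rmorphN, rmorphM, rmorphXn).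
Qed.

Section Half.
Variable R : comNzRingType.

Definition H (q : {mpoly R[5]}) : {mpoly R[5]} :=
  \sum_(m <- msupp q) (q@_m *: 'X_[mhalf m]).

Lemma HE q k : (msize q <= k)%N ->
  H q = \sum_(m : 'X_{1..5 < k}) (q@_m *: 'X_[mhalf m]).
Proof.
move=> le_qk; set I : subFinType _ := 'X_{1..5 < k}.
rewrite /H (big_mksub I) ?msupp_uniq //=; first last.
  by move=> x /msize_mdeg_lt /leq_trans; apply.
rewrite big_rmcond //= => j /memN_msupp_eq0 ->.
by rewrite scale0r.
Qed.

Lemma HD p q : H (p + q) = H p + H q.
Proof.
have h1 : (msize p <= msize p + msize q + msize (p + q))%N by rewrite -addnA leq_addr.
have h2 : (msize q <= msize p + msize q + msize (p + q))%N by rewrite -addnA (addnC (msize q)) addnA leq_addl.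
have h3 : (msize (p + q) <= msize p + msize q + msize (p + q))%N by rewrite leq_addl.
rewrite !(HE h1) !(HE h2) !(HE h3) -big_split /=.
by apply/eq_bigr => m _; rewrite mcoeffD scalerDl.
Qed.

Lemma H0 : H 0 = 0.
Proof. by apply/(addrI (H 0)); rewrite -HD !addr0. Qed.

Lemma H_sum (I : Type) (r : seq I) (F : I -> {mpoly R[5]}) :
  H (\sum_(i <- r) F i) = \sum_(i <- r) H (F i).
Proof. exact: (big_morph H HD H0). Qed.

Lemma mhalf2 (m : 'X_{1..5}) : mhalf (m *+ 2) = m.
Proof. by apply/mnmP => i; rewrite mnmE mulmnE muln2 doubleK. Qed.

Lemma HZX c (m : 'X_{1..5}) : H (c *: 'X_[m *+ 2]) = c *: 'X_[m].
Proof.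
have [->|nz] := eqVneq c 0; first by rewrite !scale0r H0.
by rewrite /H msuppMCX // big_seq1 mcoeffZ mcoeffX eqxx mulr1 mhalf2.
Qed.

Definition sq : 5.-tuple {mpoly R[5]} := [tuple 'X_i ^+ 2 | i < 5].

Lemma compX2 (m : 'X_{1..5}) : 'X_[m] \mPo sq = 'X_[m *+ 2].
Proof.
rewrite comp_mpolyX -mpolyXn mpolyXE_id -prodrXl; apply: eq_bigr => i _.
by rewrite tnth_map tnth_ord_tuple exprAC.
Qed.

Lemma H_sq p : H (p \mPo sq) = p.
Proof.
rewrite {1}[p]mpolyE raddf_sum /= H_sum [RHS]mpolyE.
by apply: eq_bigr => m _; rewrite comp_mpolyZ compX2 HZX.
Qed.

Lemma sqXU i : 'X_i \mPo sq = 'X_i ^+ 2.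
Proof. by rewrite comp_mpolyXU -tnth_nth tnth_map tnth_ord_tuple. Qed.

End Half.

Definition k0 : 'I_4 := @Ordinal 4 0 isT.
Definition k1 : 'I_4 := @Ordinal 4 1 isT.
Definition k2 : 'I_4 := @Ordinal 4 2 isT.
Definition k3 : 'I_4 := @Ordinal 4 3 isT.

Lemma sum4 (V : nmodType) (F : 'I_4 -> V) :
  \sum_(k < 4) F k = F k0 + F k1 + F k2 + F k3.
Proof.
rewrite !big_ord_recl big_ord0 addr0 !addrA.
by congr (_ + _ + _ + _); apply: (congr1 F); apply: val_inj.
Qed.

Definition hb (b : bool * bool * bool * bool) : {ffun 'I_4 -> bool} :=
  [ffun k : 'I_4 => if val k == 0%N then b.1.1.1 else if val k == 1%N then b.1.1.2
                   else if val k == 2%N then b.1.2 else b.2].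
Definition gb (f : {ffun 'I_4 -> bool}) : bool * bool * bool * bool :=
  (f k0, f k1, f k2, f k3).

Lemma hb_bij : bijective hb.
Proof.
exists gb.
  by case=> [[[b1 b2] b3] b4]; rewrite /gb /hb !ffunE.
move=> f; apply/ffunP => k; rewrite /hb /gb ffunE /=.
case: k => [[|[|[|[|k]]]] Hk] //=; congr (f _); apply: val_inj => //.
Qed.

Section SqrtProd.
Variable R : comNzRingType.

Definition Lf (e : {ffun 'I_4 -> bool}) : {mpoly R[5]} :=
  'X_ord0 + \sum_(k < 4) ((-1) ^+ (e k : nat)) *: 'X_(lift ord0 k).

Lemma Lhb b1 b2 b3 b4 : Lf (hb (b1, b2, b3, b4)) =
  'X_i0 + (-1) ^+ (b1 : nat) *: 'X_i1 + (-1) ^+ (b2 : nat) *: 'X_i2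
  + (-1) ^+ (b3 : nat) *: 'X_i3 + (-1) ^+ (b4 : nat) *: 'X_i4.
Proof.
rewrite /Lf sum4 /hb !ffunE /= !addrA.
have -> : lift ord0 k0 = i1 by apply: val_inj.
have -> : lift ord0 k1 = i2 by apply: val_inj.
have -> : lift ord0 k2 = i3 by apply: val_inj.
have -> : lift ord0 k3 = i4 by apply: val_inj.
have -> : (ord0 : 'I_5) = i0 by apply: val_inj.
by [].
Qed.

Lemma sqrtProdE : sqrtProd R =
  Ex ('X_i0 ^+ 2) ('X_i1 ^+ 2) ('X_i2 ^+ 2) ('X_i3 ^+ 2) ('X_i4 ^+ 2).
Proof.
rewrite /sqrtProd -/(Lf _).
have -> : \prod_(e : {ffun 'I_4 -> bool}) Lf e = \prod_(j : bool * bool * bool * bool) Lf (hb j).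
  by rewrite (reindex hb) //; apply: onW_bij; exact: hb_bij.
have -> : \prod_(j : bool * bool * bool * bool) Lf (hb j) =
  \prod_(b1 : bool) \prod_(b2 : bool) \prod_(b3 : bool) \prod_(b4 : bool) Lf (hb (b1, b2, b3, b4)).
  by rewrite !pair_big; apply: eq_big => // [[[[b1 b2] b3] b4]].
rewrite !big_bool !Lhb /= !expr1 !expr0 !scaleN1r !scale1r.
rewrite /Ex /Fe /sy1 /sy2 /sy3 /sy4 /sy5.
ring.
Qed.

End SqrtProd.

Definition Dgen (R : comNzRingType) (x0 x1 x2 x3 x4 v0 v1 v2 v3 v4 : R) : R :=
  let e1 := sy1 x0 x1 x2 x3 x4 in let e2 := sy2 x0 x1 x2 x3 x4 in
  let e3 := sy3 x0 x1 x2 x3 x4 in let e4 := sy4 x0 x1 x2 x3 x4 in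
  let e5 := sy5 x0 x1 x2 x3 x4 in
  F1 e1 e2 e3 e4 e5 * (v0*(1) + v1*(1) + v2*(1) + v3*(1) + v4*(1))
  + F2 e1 e2 e3 e4 e5 * (v0*(x1+x2+x3+x4) + v1*(x0+x2+x3+x4) + v2*(x0+x1+x3+x4) + v3*(x0+x1+x2+x4) + v4*(x0+x1+x2+x3))
  + F3 e1 e2 e3 e4 e5 * (v0*(x1*x2+x1*x3+x1*x4+x2*x3+x2*x4+x3*x4) + v1*(x0*x2+x0*x3+x0*x4+x2*x3+x2*x4+x3*x4) + v2*(x0*x1+x0*x3+x0*x4+x1*x3+x1*x4+x3*x4) + v3*(x0*x1+x0*x2+x0*x4+x1*x2+x1*x4+x2*x4) + v4*(x0*x1+x0*x2+x0*x3+x1*x2+x1*x3+x2*x3))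
  + F4 e1 e2 e3 e4 e5 * (v0*(x1*x2*x3+x1*x2*x4+x1*x3*x4+x2*x3*x4) + v1*(x0*x2*x3+x0*x2*x4+x0*x3*x4+x2*x3*x4) + v2*(x0*x1*x3+x0*x1*x4+x0*x3*x4+x1*x3*x4) + v3*(x0*x1*x2+x0*x1*x4+x0*x2*x4+x1*x2*x4) + v4*(x0*x1*x2+x0*x1*x3+x0*x2*x3+x1*x2*x3))
  + F5 e1 e2 e3 e4 e5 * (v0*(x1*x2*x3*x4) + v1*(x0*x2*x3*x4) + v2*(x0*x1*x3*x4) + v3*(x0*x1*x2*x4) + v4*(x0*x1*x2*x3)).

Section Eval.
Variable R : comNzRingType.

Lemma DeltaE : Delta' R = Ex 'X_i0 'X_i1 'X_i2 'X_i3 'X_i4.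
Proof.
have -> : Delta' R = H (sqrtProd R) by [].
rewrite sqrtProdE.
have E : (Ex 'X_i0 'X_i1 'X_i2 'X_i3 'X_i4) \mPo (sq R) =
  Ex ('X_i0 \mPo sq R) ('X_i1 \mPo sq R) ('X_i2 \mPo sq R) ('X_i3 \mPo sq R) ('X_i4 \mPo sq R)
  := Ex_rmorph (comp_mpoly (sq R)) _ _ _ _ _.
rewrite !sqXU in E; rewrite -E.
exact: H_sq.
Qed.

Lemma evalDelta (x : 'I_5 -> R) :
  (Delta' R).@[x] = Ex (x i0) (x i1) (x i2) (x i3) (x i4).
Proof.
have E : (Ex 'X_i0 'X_i1 'X_i2 'X_i3 'X_i4).@[x] =
  Ex (('X_i0).@[x]) (('X_i1).@[x]) (('X_i2).@[x]) (('X_i3).@[x]) (('X_i4).@[x])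
  := Ex_rmorph (meval x) _ _ _ _ _.
by rewrite DeltaE E !mevalXU.
Qed.

Lemma mderivXn i (p : {mpoly R[5]}) k :
  (p ^+ k)^`M(i) = k%:R * p ^+ k.-1 * p^`M(i).
Proof.
elim: k => [|k IH]; first by rewrite expr0 mul0r mul0r -mpolyC1 mderivC.
rewrite exprS mderivM IH; case: k {IH} => [|k] /=; rewrite ?expr0; first by ring.
rewrite exprS; ring.
Qed.

Lemma mderivNat i k : ((k%:R : {mpoly R[5]})^`M(i)) = 0.
Proof. by rewrite -mpolyC_nat mderivC. Qed.

Lemma dltXU (x : 'I_5 -> R) i j :
  (('X_j : {mpoly R[5]})^`M(i)).@[x] = (j == i)%:R.
Proof.
rewrite mderivX mnm1E; case: eqP => [->|_].
  have -> : (U_(i) - U_(i))%MM = 0%MM by apply/mnmP => k; rewrite mnmBE subnn mnm0E.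
  by rewrite mpolyX0 mevalZ meval1 mulr1.
by rewrite scale0r meval0.
Qed.

Lemma chainFe (A B : comNzRingType) (ev d : A -> B)
  (evD : forall a b, ev (a + b) = ev a + ev b)
  (evN : forall a, ev (- a) = - ev a)
  (evM : forall a b, ev (a * b) = ev a * ev b)
  (evX : forall a k, ev (a ^+ k) = ev a ^+ k)
  (evn : forall k, ev (k%:R) = k%:R)
  (dD : forall a b, d (a + b) = d a + d b)
  (dN : forall a, d (- a) = - d a)
  (dM : forall a b, d (a * b) = d a * ev b + ev a * d b)
  (dX : forall a k, d (a ^+ k) = k%:R * ev a ^+ k.-1 * d a)
  (dn : forall k, d (k%:R) = 0)
  (p1 p2 p3 p4 p5 : A) :
  d (Fe p1 p2 p3 p4 p5) =
  F1 (ev p1) (ev p2) (ev p3) (ev p4) (ev p5) * d p1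
  + F2 (ev p1) (ev p2) (ev p3) (ev p4) (ev p5) * d p2
  + F3 (ev p1) (ev p2) (ev p3) (ev p4) (ev p5) * d p3
  + F4 (ev p1) (ev p2) (ev p3) (ev p4) (ev p5) * d p4
  + F5 (ev p1) (ev p2) (ev p3) (ev p4) (ev p5) * d p5.
Proof.
rewrite /Fe /F1 /F2 /F3 /F4 /F5.
rewrite !(dn, dD, dN, dM, dX) /=.
rewrite !(evn, evD, evN, evM, evX).
move: (ev p1) (ev p2) (ev p3) (ev p4) (ev p5) => a1 a2 a3 a4 a5.
move: (d p1) (d p2) (d p3) (d p4) (d p5) => d1 d2 d3 d4 d5.
ring.
Qed.

Lemma dltFe (x : 'I_5 -> R) i (p1 p2 p3 p4 p5 : {mpoly R[5]}) :
  ((Fe p1 p2 p3 p4 p5)^`M(i)).@[x] =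
  F1 p1.@[x] p2.@[x] p3.@[x] p4.@[x] p5.@[x] * (p1^`M(i)).@[x]
  + F2 p1.@[x] p2.@[x] p3.@[x] p4.@[x] p5.@[x] * (p2^`M(i)).@[x]
  + F3 p1.@[x] p2.@[x] p3.@[x] p4.@[x] p5.@[x] * (p3^`M(i)).@[x]
  + F4 p1.@[x] p2.@[x] p3.@[x] p4.@[x] p5.@[x] * (p4^`M(i)).@[x]
  + F5 p1.@[x] p2.@[x] p3.@[x] p4.@[x] p5.@[x] * (p5^`M(i)).@[x].
Proof.
apply: (chainFe (ev := meval x) (d := fun p => (p^`M(i)).@[x])).
- exact: rmorphD.
- exact: rmorphN.
- exact: rmorphM.
- by move=> a k; rewrite rmorphXn.
- exact: rmorph_nat.
- by move=> a b /=; rewrite mderivD rmorphD.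
- by move=> a /=; rewrite mderivN rmorphN.
- by move=> a b /=; rewrite mderivM rmorphD !rmorphM.
- by move=> a k /=; rewrite mderivXn !rmorphM rmorphXn rmorph_nat.
- by move=> k /=; rewrite mderivNat rmorph0.
Qed.


Lemma chainEx (A B : comNzRingType) (ev d : A -> B)
  (evD : forall a b, ev (a + b) = ev a + ev b)
  (evN : forall a, ev (- a) = - ev a)
  (evM : forall a b, ev (a * b) = ev a * ev b)
  (evX : forall a k, ev (a ^+ k) = ev a ^+ k)
  (evn : forall k, ev (k%:R) = k%:R)
  (dD : forall a b, d (a + b) = d a + d b)
  (dN : forall a, d (- a) = - d a)
  (dM : forall a b, d (a * b) = d a * ev b + ev a * d b)
  (dX : forall a k, d (a ^+ k) = k%:R * ev a ^+ k.-1 * d a)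
  (dn : forall k, d (k%:R) = 0)
  (a0 a1 a2 a3 a4 : A) :
  d (Ex a0 a1 a2 a3 a4) = Dgen (ev a0) (ev a1) (ev a2) (ev a3) (ev a4) (d a0) (d a1) (d a2) (d a3) (d a4).
Proof.
rewrite /Ex (chainFe evD evN evM evX evn dD dN dM dX dn) /Dgen /=.
rewrite /sy1 /sy2 /sy3 /sy4 /sy5 !(dD, dM) !(evD, evM).
set f1 := F1 _ _ _ _ _. set f2 := F2 _ _ _ _ _. set f3 := F3 _ _ _ _ _.
set f4 := F4 _ _ _ _ _. set f5 := F5 _ _ _ _ _.
ring.
Qed.

Lemma dltEx (x : 'I_5 -> R) i (p0 p1 p2 p3 p4 : {mpoly R[5]}) :
  ((Ex p0 p1 p2 p3 p4)^`M(i)).@[x] =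
  Dgen p0.@[x] p1.@[x] p2.@[x] p3.@[x] p4.@[x]
       (p0^`M(i)).@[x] (p1^`M(i)).@[x] (p2^`M(i)).@[x] (p3^`M(i)).@[x] (p4^`M(i)).@[x].
Proof.
apply: (chainEx (ev := meval x) (d := fun p => (p^`M(i)).@[x])).
- exact: rmorphD.
- exact: rmorphN.
- exact: rmorphM.
- by move=> a k; rewrite rmorphXn.
- exact: rmorph_nat.
- by move=> a b /=; rewrite mderivD rmorphD.
- by move=> a /=; rewrite mderivN rmorphN.
- by move=> a b /=; rewrite mderivM rmorphD !rmorphM.
- by move=> a k /=; rewrite mderivXn !rmorphM rmorphXn rmorph_nat.
- by move=> k /=; rewrite mderivNat rmorph0.
Qed.

End Eval.

Section Deriv.
Variable R : comNzRingType.

Lemma derivDelta0 (x : 'I_5 -> R) :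
  ((Delta' R)^`M(i0)).@[x] = Dg (x i0) (x i1) (x i2) (x i3) (x i4) (x i1) (x i2) (x i3) (x i4).
Proof.
rewrite DeltaE dltEx !mevalXU !dltXU -!val_eqE /= /Dgen /Dg /=.
set f1 := F1 _ _ _ _ _. set f2 := F2 _ _ _ _ _. set f3 := F3 _ _ _ _ _.
set f4 := F4 _ _ _ _ _. set f5 := F5 _ _ _ _ _.
ring.
Qed.

Lemma derivDelta1 (x : 'I_5 -> R) :
  ((Delta' R)^`M(i1)).@[x] = Dg (x i0) (x i1) (x i2) (x i3) (x i4) (x i0) (x i2) (x i3) (x i4).
Proof.
rewrite DeltaE dltEx !mevalXU !dltXU -!val_eqE /= /Dgen /Dg /=.
set f1 := F1 _ _ _ _ _. set f2 := F2 _ _ _ _ _. set f3 := F3 _ _ _ _ _.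
set f4 := F4 _ _ _ _ _. set f5 := F5 _ _ _ _ _.
ring.
Qed.

Lemma derivDelta2 (x : 'I_5 -> R) :
  ((Delta' R)^`M(i2)).@[x] = Dg (x i0) (x i1) (x i2) (x i3) (x i4) (x i0) (x i1) (x i3) (x i4).
Proof.
rewrite DeltaE dltEx !mevalXU !dltXU -!val_eqE /= /Dgen /Dg /=.
set f1 := F1 _ _ _ _ _. set f2 := F2 _ _ _ _ _. set f3 := F3 _ _ _ _ _.
set f4 := F4 _ _ _ _ _. set f5 := F5 _ _ _ _ _.
ring.
Qed.

Lemma derivDelta3 (x : 'I_5 -> R) :
  ((Delta' R)^`M(i3)).@[x] = Dg (x i0) (x i1) (x i2) (x i3) (x i4) (x i0) (x i1) (x i2) (x i4).
Proof.
rewrite DeltaE dltEx !mevalXU !dltXU -!val_eqE /= /Dgen /Dg /=.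
set f1 := F1 _ _ _ _ _. set f2 := F2 _ _ _ _ _. set f3 := F3 _ _ _ _ _.
set f4 := F4 _ _ _ _ _. set f5 := F5 _ _ _ _ _.
ring.
Qed.

Lemma derivDelta4 (x : 'I_5 -> R) :
  ((Delta' R)^`M(i4)).@[x] = Dg (x i0) (x i1) (x i2) (x i3) (x i4) (x i0) (x i1) (x i2) (x i3).
Proof.
rewrite DeltaE dltEx !mevalXU !dltXU -!val_eqE /= /Dgen /Dg /=.
set f1 := F1 _ _ _ _ _. set f2 := F2 _ _ _ _ _. set f3 := F3 _ _ _ _ _.
set f4 := F4 _ _ _ _ _. set f5 := F5 _ _ _ _ _.
ring.
Qed.

End Deriv.
Definition sg (R : nzRingType) (b : bool) (x : R) := if b then - x else x.

Lemma prod16 (R : comNzRingType) (s0 s1 s2 s3 s4 : R) :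
  Ex (s0^+2) (s1^+2) (s2^+2) (s3^+2) (s4^+2) = (s0 + sg false s1 + sg false s2 + sg false s3 + sg false s4) * (s0 + sg false s1 + sg false s2 + sg false s3 + sg true s4) * (s0 + sg false s1 + sg false s2 + sg true s3 + sg false s4) * (s0 + sg false s1 + sg false s2 + sg true s3 + sg true s4) * (s0 + sg false s1 + sg true s2 + sg false s3 + sg false s4) * (s0 + sg false s1 + sg true s2 + sg false s3 + sg true s4) * (s0 + sg false s1 + sg true s2 + sg true s3 + sg false s4) * (s0 + sg false s1 + sg true s2 + sg true s3 + sg true s4) * (s0 + sg true s1 + sg false s2 + sg false s3 + sg false s4) * (s0 + sg true s1 + sg false s2 + sg false s3 + sg true s4) * (s0 + sg true s1 + sg false s2 + sg true s3 + sg false s4) * (s0 + sg true s1 + sg false s2 + sg true s3 + sg true s4) * (s0 + sg true s1 + sg true s2 + sg false s3 + sg false s4) * (s0 + sg true s1 + sg true s2 + sg false s3 + sg true s4) * (s0 + sg true s1 + sg true s2 + sg true s3 + sg false s4) * (s0 + sg true s1 + sg true s2 + sg true s3 + sg true s4).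
Proof. rewrite /sg /Ex /Fe /sy1 /sy2 /sy3 /sy4 /sy5. ring. Qed.


Definition QF (R : comNzRingType) (x0 x1 x2 x3 : R) : R :=
  x0 ^+ 2 + x1 ^+ 2 + x2 ^+ 2 + 9 * x3 ^+ 2
  - x0 * x1 - x0 * x2 - 3 * x0 * x3
  - x1 * x2 - 3 * x1 * x3 - 3 * x2 * x3.

Definition Cases (C : numClosedFieldType) (X0 X1 X2 X3 X4 : C) : Prop :=
  (exists a b c, X0 = (a+b)^+2 /\ X1 = c^+2 /\ X2 = c^+2 /\ X3 = a^+2 /\ X4 = b^+2) \/
  (exists a b c, X0 = c^+2 /\ X1 = (a+b)^+2 /\ X2 = c^+2 /\ X3 = a^+2 /\ X4 = b^+2) \/
  (exists a b c, X0 = c^+2 /\ X1 = c^+2 /\ X2 = (a+b)^+2 /\ X3 = a^+2 /\ X4 = b^+2) \/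
  (exists a c d, X0 = c^+2 /\ X1 = d^+2 /\ X2 = (c+d)^+2 /\ X3 = a^+2 /\ X4 = a^+2).

Lemma G (C : numClosedFieldType) (t0 t1 t2 t3 t4 : C) :
  t0 + t1 + t2 + t3 + t4 = 0 ->
  t0^+2 + t1^+2 + t2^+2 - 3 * t3^+2 - 3 * t4^+2 = 0 ->
  QF (t0^+2) (t1^+2) (t2^+2) (t3^+2) = 0 ->
  Cases (t0^+2) (t1^+2) (t2^+2) (t3^+2) (t4^+2).
Proof.
move=> hs hl hq.
have ht2 : t2 = -(t0+t1+t3+t4) by rewrite -(subr0 t2) -hs; ring.
have key : 24%:R * (t3 + t4) * ((t0 + (t3+t4)) * (t1 + (t3+t4)) * (t2 + (t3+t4))) =
   4%:R * (t0^+2 + t1^+2 + t2^+2 - 3 * t3^+2 - 3 * t4^+2)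
      * ((t0^+2 + t1^+2 + t2^+2 - 3 * t3^+2 - 3 * t4^+2) + 3%:R * t3^+2 + 6%:R * t4^+2)
   - 4%:R * QF (t0^+2) (t1^+2) (t2^+2) (t3^+2)
   - 12%:R * (t3^+2 - t3*t4 + t4^+2) * (t0^+2 + t1^+2 + t2^+2 - 3 * t3^+2 - 3 * t4^+2)
   - 3%:R * (t0^+2 + t1^+2 + t2^+2 - 3 * t3^+2 - 3 * t4^+2)^+2
   - 12%:R * (t3 + t4)^+2 * (t0^+2 + t1^+2 + t2^+2 - 3 * t3^+2 - 3 * t4^+2).
  by rewrite /QF ht2; ring.
rewrite hl hq in key.
have {}key : 24%:R * (t3 + t4) * ((t0 + (t3+t4)) * (t1 + (t3+t4)) * (t2 + (t3+t4))) = 0.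
  by rewrite key; ring.
subst t2.
have [hu|hu] := eqVneq (t3 + t4) 0.
  have ht3 : t3 = - t4 by apply/eqP; rewrite -addr_eq0 hu.
  subst t3.
  right; right; right; exists t4, t0, t1; rewrite /=; do ! split; ring.
move/eqP: key; rewrite !mulf_eq0 pnatr_eq0 /= (negbTE hu) /=.
case/orP => [/orP [h|h]|h]; move: h; rewrite addr_eq0 => /eqP h.
- subst t0; left; exists t3, t4, t1; do ! split; ring.
- subst t1; right; left; exists t3, t4, t0; do ! split; ring.
- right; right; left; exists t3, t4, t0.
  move/eqP: h; rewrite -subr_eq0 => /eqP e.
  have ht1 : t1 = - t0 by rewrite -(subr0 (-t0)) -e; ring.
  subst t1; do ! split; ring.
Qed.

Lemma Gs (C : numClosedFieldType) (b1 b2 b3 b4 : bool) (s0 s1 s2 s3 s4 : C) :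
  s0 + sg b1 s1 + sg b2 s2 + sg b3 s3 + sg b4 s4 = 0 ->
  s0^+2 + s1^+2 + s2^+2 - 3 * s3^+2 - 3 * s4^+2 = 0 ->
  QF (s0^+2) (s1^+2) (s2^+2) (s3^+2) = 0 ->
  Cases (s0^+2) (s1^+2) (s2^+2) (s3^+2) (s4^+2).
Proof.
have sq (b : bool) (s : C) : (sg b s)^+2 = s^+2 by case: b; rewrite /sg ?sqrrN.
move=> hs hl hq.
have := G hs; rewrite !sq; exact.
Qed.

Lemma cases_of (C : numClosedFieldType) (X0 X1 X2 X3 X4 : C) :
  X0 + X1 + X2 - 3 * X3 - 3 * X4 = 0 ->
  QF X0 X1 X2 X3 = 0 -> Ex X0 X1 X2 X3 X4 = 0 -> Cases X0 X1 X2 X3 X4.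
Proof.
have [s0 ->] : exists s, X0 = s^+2 by exists (sqrtC X0); rewrite sqrtCK.
have [s1 ->] : exists s, X1 = s^+2 by exists (sqrtC X1); rewrite sqrtCK.
have [s2 ->] : exists s, X2 = s^+2 by exists (sqrtC X2); rewrite sqrtCK.
have [s3 ->] : exists s, X3 = s^+2 by exists (sqrtC X3); rewrite sqrtCK.
have [s4 ->] : exists s, X4 = s^+2 by exists (sqrtC X4); rewrite sqrtCK.
move=> hl hq; rewrite prod16 => /eqP hE.
rewrite !mulf_eq0 in hE.
repeat (case/orP: hE => hE).
all: by move/eqP: hE => hE; exact: (Gs hE hl hq).
Qed.

Lemma singP (C : numClosedFieldType) (x : 'I_5 -> C) :
  Ex (x i0) (x i1) (x i2) (x i3) (x i4) = 0 ->
  Dg (x i0) (x i1) (x i2) (x i3) (x i4) (x i1) (x i2) (x i3) (x i4) = 0 ->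
  Dg (x i0) (x i1) (x i2) (x i3) (x i4) (x i0) (x i2) (x i3) (x i4) = 0 ->
  Dg (x i0) (x i1) (x i2) (x i3) (x i4) (x i0) (x i1) (x i3) (x i4) = 0 ->
  Dg (x i0) (x i1) (x i2) (x i3) (x i4) (x i0) (x i1) (x i2) (x i4) = 0 ->
  Dg (x i0) (x i1) (x i2) (x i3) (x i4) (x i0) (x i1) (x i2) (x i3) = 0 ->
  inSingR x.
Proof.
move=> hE h0 h1 h2 h3 h4; split; first by rewrite evalDelta.
move=> i.
have : i = i0 \/ i = i1 \/ i = i2 \/ i = i3 \/ i = i4.
  case: i => [[|[|[|[|[|?]]]]] Hi] //.
  - by left; apply: val_inj.
  - by right; left; apply: val_inj.
  - by right; right; left; apply: val_inj.
  - by right; right; right; left; apply: val_inj.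
  - by right; right; right; right; apply: val_inj.
by case=> [->|[->|[->|[->|->]]]]; rewrite ?derivDelta0 ?derivDelta1 ?derivDelta2 ?derivDelta3 ?derivDelta4.
Qed.

Unset Implicit Arguments.

Ltac polyfin := rewrite /Ex /Dg /Fe /F1 /F2 /F3 /F4 /F5 /sy1 /sy2 /sy3 /sy4 /sy5; ring.

Theorem mainTheorem12 (C : numClosedFieldType) (x : 'I_5 -> C) :
  proj_point x -> inQ x -> inR x ->
  inSingR x /\
  (inS i0 i1 i2 i3 i4 x \/ inS i0 i2 i1 i3 i4 x \/
   inS i1 i2 i0 i3 i4 x \/ inS i3 i4 i0 i1 i2 x).
Proof.
move=> _ [hl hq] hR.
have hE : Ex (x i0) (x i1) (x i2) (x i3) (x i4) = 0 by rewrite -evalDelta.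
have hl' : x i0 + x i1 + x i2 - 3 * x i3 - 3 * x i4 = 0 by exact: hl.
have hq' : QF (x i0) (x i1) (x i2) (x i3) = 0 by exact: hq.
have [[a [b [c [e0 [e1 [e2 [e3 e4]]]]]]]|[[a [b [c [e0 [e1 [e2 [e3 e4]]]]]]]|[[a [b [c [e0 [e1 [e2 [e3 e4]]]]]]]|[a [c [d [e0 [e1 [e2 [e3 e4]]]]]]]]]] := cases_of hl' hq' hE.
- split; first by apply: singP; rewrite e0 e1 e2 e3 e4; polyfin.
  by right; right; left; rewrite /inS e0 e1 e2 e3 e4; split; ring.
- split; first by apply: singP; rewrite e0 e1 e2 e3 e4; polyfin.
  by right; left; rewrite /inS e0 e1 e2 e3 e4; split; ring.
- split; first by apply: singP; rewrite e0 e1 e2 e3 e4; polyfin.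
  by left; rewrite /inS e0 e1 e2 e3 e4; split; ring.
- split; first by apply: singP; rewrite e0 e1 e2 e3 e4; polyfin.
  by right; right; right; rewrite /inS e0 e1 e2 e3 e4; split; ring.
Qed.
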